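(* For every integer $m\ge 0$ and every integer $n\ge 2$, the polynomials $l_n(x,m,s)$ satisfy $$l_n(x,m,s)=x\,l_{n-1}(x,m,s)+s\,\lambda_{n-2}(m)\,l_{n-2}(x,m,s),$$ where $\lambda_0(m)=\frac{2}{m+1}$ and $\lambda_n(m)=\frac{(n+1)(n+2m)}{(n+m)(n+m+1)}$ for $n\ge 1$.
   Context: For an integer $m\ge 0$ and indeterminates $x,s$, define $$l_n(x,m,s)=\sum_{k=0}^{\lfloor n/2\rfloor}\frac{n!}{k!\,(n-2k)!}\,\frac{1}{\prod_{j=1}^{k}(m+n-j)}\,s^k x^{n-2k}\qquad(n\ge 0),$$ with empty products equal to $1$ (so $l_0=1$, $l_1=x$). *)

(* Defs.v *)
(* Polynomials in the two indeterminates x, s over Q are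
   represented as {poly {poly rat}}: the outer variable 'X is x, and the
   inner variable, lifted as 'X%:P, is s. *)
From HB Require Import structures.
From mathcomp Require Import all_boot all_order all_algebra.
Set Implicit Arguments. Unset Strict Implicit. Unset Printing Implicit Defensive.
Import Order.TTheory GRing.Theory Num.Theory.
Local Open Scope ring_scope.

Definition sX : {poly {poly rat}} := ('X)%:P.

Definition lcoef (n m k : nat) : rat :=
  (n`!)%:R / ((k`!)%:R * ((n - 2 * k)`!)%:R)
  / \prod_(1 <= j < k.+1) ((m + n - j)%N)%:R.

Definition l (n m : nat) : {poly {poly rat}} :=
  \sum_(0 <= k < (n./2).+1) ((lcoef n m k)%:P%:P * sX ^+ k * 'X ^+ (n - 2 * k)).

Definition lambda (n m : nat) : rat :=
  if n is 0 then 2%:R / (m.+1)%:R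
  else ((n.+1)%:R * (n + 2 * m)%:R) / ((n + m)%:R * (n + m).+1%:R).

(* Main.v *)
Require Import Defs.
From HB Require Import structures.
From mathcomp Require Import all_boot all_order all_algebra.
From mathcomp Require Import ring lra zify.
Import GRing.Theory Num.Theory.
Local Open Scope ring_scope.


Definition Rr (a k : nat) : rat := \prod_(1 <= j < k.+1) ((a - j)%N)%:R.

Lemma Rr1 a k : Rr a.+1 k.+1 = a%:R * Rr a k.
Proof.
rewrite /Rr big_nat_recl // subn1 /=; congr (_ * _).
Qed.

Lemma Rr2 a k : Rr a k.+1 = Rr a k * ((a - k.+1)%N)%:R.
Proof. by rewrite /Rr big_nat_recr. Qed.

Lemma Rr_neq0 a k : (k < a)%N -> Rr a k != 0.
Proof.
elim: k => [|k IH] H; first by rewrite /Rr big_geq // oner_neq0.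
rewrite Rr2 mulf_neq0 ?IH ?pnatr_eq0 -?lt0n ?subn_gt0 //; exact: ltnW.
Qed.

Lemma lcoefE N m k : lcoef N m k = (N`!)%:R / ((k`!)%:R * ((N - 2 * k)`!)%:R) / Rr (m + N) k.
Proof. by []. Qed.


Lemma main_case m k t :
  let n := (2 * k + t.+1)%N in
  lcoef n.+2 m k.+1 = lcoef n.+1 m k.+1 + lambda n m * lcoef n m k.
Proof.
move=> n; rewrite !lcoefE.
have e1 : (n.+2 - 2 * k.+1 = t.+1)%N by rewrite /n; lia.
have e2 : (n.+1 - 2 * k.+1 = t)%N by rewrite /n; lia.
have e3 : (n - 2 * k = t.+1)%N by rewrite /n; lia.
have e4 : (m + n.+2 = (m + n).+1.+1)%N by rewrite /n; lia.
have e5 : (m + n.+1 = (m + n).+1)%N by rewrite /n; lia.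
rewrite e1 e2 e3 e4 e5 !Rr1.
have HY : Rr (m + n).+1 k * ((m + n - k)%N)%:R = ((m+n)%N)%:R * Rr (m + n) k.
  by rewrite -Rr1 Rr2 subSS.
have hk : ((m + n - k) = m + k + t.+1)%N by rewrite /n; lia.
rewrite hk in HY.
have X0 : Rr (m + n) k != 0 by apply: Rr_neq0; rewrite /n; lia.
have -> : Rr (m + n).+1 k = ((m+n)%N)%:R * Rr (m + n) k / ((m + k + t.+1)%N)%:R.
  by rewrite -HY mulfK // pnatr_eq0; lia.
rewrite /lambda /n addnS.
rewrite !factS.
move: X0; set X := Rr _ _ => X0.
have F0 : ((2 * k + t)`!)%:R != 0 :> rat by rewrite pnatr_eq0 -lt0n fact_gt0.
have K0 : (k`!)%:R != 0 :> rat by rewrite pnatr_eq0 -lt0n fact_gt0.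
have T0 : (t`!)%:R != 0 :> rat by rewrite pnatr_eq0 -lt0n fact_gt0.
move: F0 K0 T0; set F := (_`!)%:R; set K := (k`!)%:R; set T := (t`!)%:R => F0 K0 T0.
rewrite !natrM !natrD.
field.
repeat (apply/andP; split); try done; try by move: X0; rewrite /X /n addnS. all: apply: lt0r_neq0;
  have:= ler0n rat m; have:= ler0n rat k; have:= ler0n rat t; lra.
Qed.


Lemma bnd_case0 m : lcoef 2 m 1 = lambda 0 m * lcoef 0 m 0.
Proof.
rewrite !lcoefE /lambda /Rr big_nat1 big_geq // /=.
have -> : (m + 2 - 1 = m.+1)%N by lia.
rewrite /= !factS fact0 /= !muln1; field.
by apply: lt0r_neq0; have := ler0n rat m; lra.
Qed.

Lemma bnd_case m k :
  let n := (2 * k.+1)%N in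
  lcoef n.+2 m k.+2 = lambda n m * lcoef n m k.+1.
Proof.
move=> n; rewrite !lcoefE.
have e1 : (n.+2 - 2 * k.+2 = 0)%N by rewrite /n; lia.
have e3 : (n - 2 * k.+1 = 0)%N by rewrite /n; lia.
have e4 : (m + n.+2 = (m + n).+1.+1)%N by rewrite /n; lia.
rewrite e1 e3 e4 Rr1.
have HY : Rr (m + n).+1 k.+1 * ((m + n - k.+1)%N)%:R = ((m+n)%N)%:R * Rr (m + n) k.+1.
  by rewrite -Rr1 [in RHS]Rr2 subSS.
have hk : ((m + n - k.+1) = m + k.+1)%N by rewrite /n; lia.
rewrite hk in HY.
have X0 : Rr (m + n) k.+1 != 0 by apply: Rr_neq0; rewrite /n; lia.
have -> : Rr (m + n).+1 k.+1 = ((m+n)%N)%:R * Rr (m + n) k.+1 / ((m + k.+1)%N)%:R.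
  by rewrite -HY mulfK // pnatr_eq0 addnS.
have -> : n = (2 * k + 1).+1%N by rewrite /n; lia.
rewrite /lambda.
rewrite !factS fact0.
move: X0; set X := Rr _ _ => X0.
have F0 : ((2 * k + 1)`!)%:R != 0 :> rat by rewrite pnatr_eq0 -lt0n fact_gt0.
have K0 : (k`!)%:R != 0 :> rat by rewrite pnatr_eq0 -lt0n fact_gt0.
move: F0 K0; set F := (_`!)%:R; set K := (k`!)%:R => F0 K0.
rewrite !natrM !natrD.
field.
repeat (apply/andP; split); try done; try by move: X0; rewrite /X; have -> : n = (2*k+1).+1%N by rewrite /n; lia.
all: apply: lt0r_neq0;
  have:= ler0n rat m; have:= ler0n rat k; lra.
Qed.


Definition cc N m k : rat := if (2 * k <= N)%N then lcoef N m k else 0.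
Definition D N m k : rat := if k is k'.+1 then cc N m k' else 0.

Lemma lcoef0 N m : lcoef N m 0 = 1.
Proof.
rewrite lcoefE /Rr big_geq // subn0 fact0 mul1r divr1 divff //.
by rewrite pnatr_eq0 -lt0n fact_gt0.
Qed.

Lemma scal n m k : cc n.+2 m k = cc n.+1 m k + lambda n m * D n m k.
Proof.
rewrite /D; case: k => [|k]; first by rewrite /cc !muln0 /= !lcoef0 mulr0 addr0.
rewrite /cc; case: (ltngtP (2 * k) n) => H.
- have [t ->] : exists t, n = (2 * k + t.+1)%N by exists (n - 2 * k).-1; lia.
  repeat (case: ifP => ?); try lia.
  exact: main_case.
- repeat (case: ifP => ?); try lia.
  by rewrite mulr0 addr0.
- repeat (case: ifP => ?); try lia.
  rewrite add0r -H; clear -k m; case: k => [|k]; first by rewrite bnd_case0.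
  exact: bnd_case.
Qed.

Lemma lE N m M : (N./2 < M)%N ->
  l N m = \sum_(0 <= k < M) ((cc N m k)%:P%:P * sX ^+ k * 'X ^+ (N - 2 * k)).
Proof.
move=> HM; rewrite /l [RHS](big_cat_nat (n := N./2.+1)) //=.
rewrite [X in _ + X]big1_seq ?addr0.
  apply: eq_big_nat => k /andP[_ Hk]; rewrite /cc ifT //.
  by rewrite mul2n -geq_half_double -ltnS.
move=> k /andP[_]; rewrite mem_iota => /andP[Hk _].
rewrite /cc ifF ?mul0r //.
by apply/negbTE; rewrite -ltnNge mul2n -ltn_half_double.
Qed.

Theorem mainTheorem3 (m n : nat) : (2 <= n)%N ->
  l n m = 'X * l n.-1 m + sX * (lambda (n - 2) m)%:P%:P * l (n - 2) m.
Proof.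
case: n => [|[|n]] // _.
have -> : (n.+2 - 2 = n)%N by lia.
rewrite /= (@lE n.+2 m n.+3); last by rewrite ltn_half_double; lia.
rewrite (@lE n.+1 m n.+3); last by rewrite ltn_half_double; lia.
rewrite (@lE n m n.+2); last by rewrite ltn_half_double; lia.
rewrite !mulr_sumr.
have -> : \sum_(0 <= k < n.+2) sX * (lambda n m)%:P%:P *
      ((cc n m k)%:P%:P * sX ^+ k * 'X ^+ (n - 2 * k)) =
    \sum_(0 <= k < n.+3) (lambda n m * D n m k)%:P%:P * sX ^+ k * 'X ^+ (n.+2 - 2 * k).
  rewrite [RHS]big_nat_recl // /D mulr0 !polyC0 !mul0r add0r.
  apply: eq_bigr => k _.
  have -> : (n.+2 - 2 * k.+1 = n - 2 * k)%N by lia.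
  rewrite exprS !polyCM; ring.
rewrite -big_split; apply: eq_bigr => k _ /=.
rewrite scal.
have HX : (cc n.+1 m k)%:P%:P * 'X ^+ (n.+1 - 2 * k) * 'X
    = (cc n.+1 m k)%:P%:P * 'X ^+ (n.+2 - 2 * k) :> {poly {poly rat}}.
  case: (leqP (2 * k) n.+1) => H.
    by rewrite -mulrA -exprSr -subSn.
  by rewrite /cc ifF ?polyC0 ?mul0r //; apply/negbTE; rewrite -ltnNge.
rewrite !polyCD !mulrDl.
transitivity ((cc n.+1 m k)%:P%:P * 'X ^+ (n.+2 - 2 * k) * sX ^+ k +
   (lambda n m * D n m k)%:P%:P * sX ^+ k * 'X ^+ (n.+2 - 2 * k)).
  rewrite !polyCM; ring.
rewrite -HX; ring.
Qed.
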